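(* Let $x_0\in\mathbb{R}^d$ and let $K\subset\mathcal{D}_0$ be an OU set about $x_0$. Then $K$ is Lebesgue measurable; the closure $\bar K$ and the closure $\overline{K^\circ}$ of the interior of $K$ are also OU sets about $x_0$; and $\lambda(K^\circ)=\lambda(K)=\lambda(\bar K)$, where $\lambda$ is Lebesgue measure on $\mathbb{R}^d$.
   Context: For $x_0\in\mathbb{R}^d$, $\mathcal{D}_0=\{x\in\mathbb{R}^d: x\ge x_0\}$, with inequalities between vectors taken componentwise. A set $K\subset\mathcal{D}_0$ is called orthounimodal (OU) about $x_0$ if for every $x\in K$ and every $x'$ with $x\ge x'\ge x_0$ we have $x'\in K$. *)

(* Defs.v *)
(* R^d is modelled as row vectors 'rV[R]_d over an
   abstract R : realType, with the library's (product = Euclidean) topology. *)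
From HB Require Import structures.
From mathcomp Require Import all_boot all_order all_algebra.
From mathcomp Require Import all_classical all_reals.
From mathcomp Require Import ereal topology normedtype sequences.
Set Implicit Arguments. Unset Strict Implicit. Unset Printing Implicit Defensive.
Import Order.TTheory GRing.Theory Num.Theory numFieldNormedType.Exports.
Local Open Scope classical_set_scope.
Local Open Scope ring_scope.

Definition vle {R : realType} {d : nat} (x y : 'rV[R]_d) : Prop :=
  forall i : 'I_d, x ord0 i <= y ord0 i.

Definition Dom0 {R : realType} {d : nat} (x0 : 'rV[R]_d) : set 'rV[R]_d :=
  [set x | vle x0 x].

Definition OU {R : realType} {d : nat} (x0 : 'rV[R]_d) (K : set 'rV[R]_d) : Prop :=
  K `<=` Dom0 x0 /\
  (forall x x', K x -> vle x' x -> vle x0 x' -> K x').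

Definition box {R : realType} {d : nat} (a b : 'rV[R]_d) : set 'rV[R]_d :=
  [set x | vle a x /\ vle x b].
Definition box_vol {R : realType} {d : nat} (a b : 'rV[R]_d) : R :=
  \prod_(i < d) Num.max (b ord0 i - a ord0 i) 0.

Definition leb_outer {R : realType} {d : nat} (A : set 'rV[R]_d) : \bar R :=
  ereal_inf [set S : \bar R | exists a b : nat -> 'rV[R]_d,
      A `<=` \bigcup_k box (a k) (b k) /\
      S = (\sum_(0 <= k <oo) (box_vol (a k) (b k))%:E)%E].

Definition leb_measurable {R : realType} {d : nat} (A : set 'rV[R]_d) : Prop :=
  forall E : set 'rV[R]_d,
    leb_outer E = (leb_outer (E `&` A) + leb_outer (E `&` ~` A))%E.

(* Lebesgue measure lambda = restriction of the outer measure to the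
   Lebesgue measurable sets (all sets below are measurable). *)
Definition lambda {R : realType} {d : nat} (A : set 'rV[R]_d) : \bar R :=
  leb_outer A.

(* Main.v *)
Require Import Defs.
From HB Require Import structures.
From mathcomp Require Import all_boot all_order all_algebra.
From mathcomp Require Import all_classical all_reals.
From mathcomp Require Import ereal topology normedtype sequences measure.
From mathcomp Require Import ring lra zify.
Import Order.TTheory GRing.Theory Num.Theory numFieldNormedType.Exports.
Local Open Scope classical_set_scope.
Local Open Scope ring_scope.

Section Topo.
Variables (R : realType) (d : nat).
Implicit Types (x y z : 'rV[R]_d) (A : set 'rV[R]_d).

Lemma ballP x y e : ball x e y <-> (0 < e /\ forall i, `|x ord0 i - y ord0 i| < e).
Proof.
rewrite /ball /=; split=> [[e0 H]|[e0 H]]; split=> //.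
- by move=> i; have := H ord0 i; rewrite /ball /=.
- by move=> i j; rewrite (ord1 i) /ball /=; exact: H.
Qed.

Lemma closureP A x : closure A x <->
  (forall e, 0 < e -> exists y, A y /\ forall i, `|x ord0 i - y ord0 i| < e).
Proof.
split.
- move=> cl e e0.
  have nb : nbhs x (ball x e) by apply/nbhs_ballP; exists e.
  have [y [Ay /ballP [_ H]]] := cl _ nb.
  by exists y.
- move=> H B /nbhs_ballP [e e0 sB].
  have [y [Ay Hy]] := H e e0.
  by exists y; split => //; apply: sB; apply/ballP.
Qed.

Lemma interiorP A x : interior A x <->
  (exists2 e, 0 < e & forall y, (forall i, `|x ord0 i - y ord0 i| < e) -> A y).
Proof.
rewrite /interior /=; split.
- move=> /nbhs_ballP [e e0 sB]; exists e => // y Hy; apply: sB; exact/ballP.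
- move=> [e e0 H]; apply/nbhs_ballP; exists e => // y /ballP [_ Hy]; exact: H.
Qed.

End Topo.
Arguments ballP {R d} x y e.
Arguments closureP {R d} A x.
Arguments interiorP {R d} A x.

Section OUtopo.
Variables (R : realType) (d : nat) (x0 : 'rV[R]_d).
Implicit Types (x y z : 'rV[R]_d) (A K : set 'rV[R]_d).

Lemma closure_Dom0 A : A `<=` Dom0 x0 -> closure A `<=` Dom0 x0.
Proof.
move=> sA x /closureP cl i; rewrite leNgt; apply/negP => lt.
have h0 : 0 < x0 ord0 i - x ord0 i by rewrite subr_gt0.
have [y [Ay Hy]] := cl _ h0.
have := sA _ Ay i; move: (Hy i); rewrite ltr_norml => /andP[h1 h2] h3.
lra.
Qed.

Lemma OU_closure K : OU x0 K -> OU x0 (closure K).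
Proof.
move=> [sK dK]; split; first exact: closure_Dom0.
move=> x x' /closureP cl le1 le2; apply/closureP => e e0.
have [y [Ky Hy]] := cl e e0.
pose z := \row_i (if y ord0 i <= x' ord0 i then y ord0 i else x' ord0 i).
exists z; split.
- apply: (dK y) => // i; rewrite /z mxE; case: ifP => h //.
  + by rewrite ltW // ltNge h.
  + exact: (sK _ Ky i).
- move=> i; rewrite /z mxE; move: (Hy i) (le1 i); rewrite !ltr_norml => /andP[h1 h2] h3.
  case: ifP => h; [|move/negbT: h; rewrite -ltNge => h]; apply/andP; split; lra.
Qed.

Lemma interior_sub A : interior A `<=` A.
Proof.
move=> x /interiorP [e e0 H]; apply: H => i; by rewrite subrr normr0.
Qed.

Lemma OU_cl_int K : OU x0 K -> OU x0 (closure (interior K)).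
Proof.
move=> [sK dK]; split.
  by apply: closure_Dom0; apply: subset_trans sK; exact: interior_sub.
move=> x x' /closureP cl le1 le2; apply/closureP => e e0.
have e2 : 0 < e / 2 by lra.
have [y [Iy Hy]] := cl _ e2.
have Ky := @interior_sub K y Iy.
have [del del0 Hdel] := (interiorP _ _).1 Iy.
pose eta := (if del <= e then del else e) / 4.
have eta0 : 0 < eta by rewrite /eta; case: ifP => _; lra.
have eta1 : eta <= del / 4 by rewrite /eta; case: ifP => h; [lra|move/negbT: h; rewrite -ltNge => h; lra].
have eta2 : eta <= e / 4 by rewrite /eta; case: ifP => h; lra.
pose m i := if y ord0 i <= x' ord0 i then y ord0 i else x' ord0 i.
have m1 i : m i <= y ord0 i.
  by rewrite /m; case: ifP => h //; move/negbT: h; rewrite -ltNge => h; exact: ltW.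
have m2 i : x0 ord0 i <= m i by rewrite /m; case: ifP => _; [exact: (sK _ Ky i) | exact: le2].
pose z := \row_i (m i + eta).
exists z; split.
- apply/interiorP; exists eta => // w Hw.
  pose u := \row_i (y ord0 i + 2 * eta).
  have Ku : K u.
    apply: Hdel => i; rewrite /u mxE.
    have -> : y ord0 i - (y ord0 i + 2 * eta) = - (2 * eta) by ring.
    rewrite normrN ger0_norm; lra.
  apply: (dK u) => // i.
  + move: (Hw i) (m1 i); rewrite /z /u !mxE ltr_norml => /andP[h1 h2] h3; lra.
  + move: (Hw i) (m2 i); rewrite /z !mxE ltr_norml => /andP[h1 h2] h3; lra.
- move=> i; rewrite /z mxE; move: (Hy i) (le1 i); rewrite !ltr_norml => /andP[h1 h2] h3.
  rewrite /m; case: ifP => h; [|move/negbT: h; rewrite -ltNge => h]; apply/andP; split; lra.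
Qed.
End OUtopo.


Section Comb.
Local Close Scope ring_scope.
Local Close Scope classical_set_scope.
Variables (d N w : nat) (d0 : (0 < d)%N) (w0 : (0 < w)%N).
Local Notation G := {ffun 'I_d -> 'I_N}.

Lemma card_coord0 (i : 'I_d) :
  (\sum_(s : G) (val (s i) == 0%N) <= N ^ d.-1)%N.
Proof.
pose F (j : 'I_d) (k : 'I_N) : nat := if j == i then (val k == 0%N) : nat else 1%N.
have -> : \sum_(s : G) (val (s i) == 0%N) = \sum_(s : G) \prod_j F j (s j).
  apply: eq_bigr => s _; rewrite (bigD1 i) //= big1 ?muln1 /F ?eqxx //.
  by move=> j /negbTE ->.
rewrite -bigA_distr_bigA /=.
apply: (@leq_trans (\prod_(j : 'I_d) (if j == i then 1 else N))%N).
  apply: leq_prod => j _; rewrite /F; case: eqP => _.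
    case: N => [|M]; first by rewrite big_ord0.
    by rewrite big_ord_recl /= big1.
  by rewrite sum1_card card_ord.
rewrite (bigD1 i) //= eqxx mul1n.
rewrite (eq_bigr (fun=> N)); last by move=> j /negbTE ->.
by rewrite prod_nat_const cardC1 card_ord.
Qed.

Lemma card_starts :
  (#|[set s : G | [exists i, val (s i) == 0%N]]| <= d * N ^ d.-1)%N.
Proof.
rewrite -sum1_card.
apply: (@leq_trans (\sum_(s : G) \sum_(i : 'I_d) (val (s i) == 0%N))%N).
  rewrite big_mkcond /=; apply: leq_sum => s _; rewrite inE.
  case: existsP => [[i hi]|_] //.
  by rewrite (bigD1 i) //= hi.
rewrite exchange_big /=.
apply: (@leq_trans (\sum_(i : 'I_d) N ^ d.-1)%N).
  by apply: leq_sum => i _; exact: card_coord0.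
by rewrite sum_nat_const card_ord.
Qed.


Let i0 : 'I_d := Ordinal d0.
Definition amin (g : G) : 'I_d := [arg min_(i < i0) (g i : nat)].
Definition mg (g : G) : nat := g (amin g).
Lemma mg_le (g : G) j : (mg g <= g j)%N.
Proof. by rewrite /mg /amin; case: arg_minnP => // i _ H; exact: H. Qed.

Definition start (g : G) : G :=
  [ffun i => Ordinal (leq_ltn_trans (leq_subr (mg g) (g i)) (ltn_ord (g i)))].
Definition phi (g : G) : G * 'I_w := (start g, Ordinal (ltn_pmod (mg g) w0)).

Lemma chain_count (P : {pred G}) :
  (forall t s, t \in P -> s \in P -> (forall i, (t i + w <= s i)%N) -> False) ->
  (#|P| <= w * (d * N ^ d.-1))%N.
Proof.
move=> hP.
have key t s : t \in P -> s \in P -> phi t = phi s -> (mg t <= mg s)%N -> t = s.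
  move=> Pt Ps [/ffunP hst hm] le.
  have hi i : (t i - mg t = s i - mg s)%N.
    by have := hst i; rewrite !ffunE => /(congr1 val).
  have [lt|gt|eq] := ltngtP (mg t) (mg s); last first.
  - apply/ffunP => i; apply/val_inj => /=; have := hi i.
    have := mg_le t i; have := mg_le s i; rewrite eq; lia.
  - by rewrite ltnNge le in gt.
  exfalso; apply: (hP t s Pt Ps) => i.
  have hw : (w <= mg s - mg t)%N.
    apply: dvdn_leq; first by rewrite subn_gt0.
    by rewrite -eqn_mod_dvd ?(ltnW lt) // hm.
  have := hi i; have := mg_le t i; have := mg_le s i; lia.
have inj : {in P &, injective phi}.
  move=> t s Pt Ps e; case: (leqP (mg t) (mg s)) => h; first exact: key.
  by apply/esym; apply: key => //; rewrite ?e // ltnW.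
rewrite -(card_in_imset inj).
pose S := [set s : G | [exists i, val (s i) == 0%N]]%SET.
apply: (@leq_trans #|finset.setX S [set: 'I_w]%SET|).
  apply: subset_leq_card; apply/fintype.subsetP => _ /imsetP [g _ ->].
  rewrite !inE andbT; apply/existsP; exists (amin g).
  by rewrite /phi /start ffunE /= subnn.
rewrite cardsX cardsT card_ord mulnC leq_mul2l card_starts orbT //.
Qed.

End Comb.


Lemma maxr_le (R : realType) (a b : R) : a <= b -> Num.max a b = b.
Proof. by move=> h; rewrite maxEle h. Qed.
Lemma maxr_ge (R : realType) (a b : R) : b <= a -> Num.max a b = a.
Proof. move=> h; rewrite maxEle; case: ifP => // h2; apply/eqP; by rewrite eq_le h h2. Qed.

Section Basic.
Variables (R : realType) (d : nat).
Implicit Types (a b x : 'rV[R]_d) (A B : set 'rV[R]_d).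
Local Notation mu := (@leb_outer R d).

Lemma vol_ge0 a b : 0 <= box_vol a b.
Proof. by apply: prodr_ge0 => i _; rewrite le_max lexx orbT. Qed.

Lemma mu_ge0 A : (0 <= mu A)%E.
Proof.
apply: le_ereal_inf_tmp => _ [a [b [_ ->]]].
by apply: nneseries_ge0 => k _ _; rewrite lee_fin vol_ge0.
Qed.

Lemma le_mu A B : A `<=` B -> (mu A <= mu B)%E.
Proof.
move=> AB; apply: ereal_inf_le_tmp => _ [a [b [cov ->]]].
by exists a, b; split => //; exact: subset_trans cov.
Qed.

Lemma mu_cover A (a b : nat -> 'rV[R]_d) : A `<=` \bigcup_k box (a k) (b k) ->
  (mu A <= \sum_(0 <= k <oo) (box_vol (a k) (b k))%:E)%E.
Proof. by move=> cov; apply: ereal_inf_lbound; exists a, b. Qed.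


Variable (d0 : (0 < d)%N).
Definition e1 : 'rV[R]_d := const_mx 1.
Definition e0 : 'rV[R]_d := const_mx 0.

Lemma box_e10 : box e1 e0 = set0.
Proof.
apply/seteqP; split => // x [h1 h2]; have := h1 (Ordinal d0); have := h2 (Ordinal d0).
rewrite !mxE; lra.
Qed.

Lemma vol_e10 : box_vol e1 e0 = 0.
Proof.
rewrite /box_vol (bigD1 (Ordinal d0)) //= !mxE maxr_le ?mul0r //; lra.
Qed.

Lemma mu_fin A (a b : nat -> 'rV[R]_d) M :
  A `<=` [set x | exists2 k, (k < M)%N & box (a k) (b k) x] ->
  (mu A <= (\sum_(k < M) box_vol (a k) (b k))%:E)%E.
Proof.
move=> cov.
pose a' k := if (k < M)%N then a k else e1.
pose b' k := if (k < M)%N then b k else e0.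
apply: (le_trans (mu_cover A a' b' _)).
  move=> x /cov [k kM bx]; exists k => //; by rewrite /a' /b' kM.
rewrite (nneseries_split 0 M); last by move=> k _; rewrite lee_fin vol_ge0.
rewrite add0n eseries0 ?adde0; last first.
  move=> k kM _; rewrite /a' /b' ltnNge kM /= vol_e10 //.
rewrite sumEFin lee_fin big_mkord le_eqVlt; apply/orP; left; apply/eqP/eq_bigr => k _.
by rewrite /a' /b' ltn_ord.
Qed.

Lemma mu0 : mu set0 = 0%E.
Proof.
apply/eqP; rewrite eq_le mu_ge0 andbT.
apply: (le_trans (@mu_fin set0 (fun=> e1) (fun=> e0) 0 _)).
  by [].
by rewrite big_ord0.
Qed.


Lemma mu_finset (I : finType) (Q : {set I}) (al be : I -> 'rV[R]_d) A :
  A `<=` [set x | exists2 g, g \in Q & box (al g) (be g) x] ->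
  (mu A <= (\sum_(g in Q) box_vol (al g) (be g))%:E)%E.
Proof.
move=> cov.
case: (pickP (mem Q)) => [g0 Qg0|Q0].
  pose s := enum Q.
  apply: (le_trans (@mu_fin A (fun k => al (nth g0 s k)) (fun k => be (nth g0 s k)) (size s) _)).
    move=> x /cov [g Qg bx]; exists (index g s).
      by rewrite index_mem mem_enum.
    by rewrite nth_index // mem_enum.
  rewrite lee_fin -(big_mkord xpredT (fun k => box_vol (al (nth g0 s k)) (be (nth g0 s k)))).
  by rewrite -(@big_nth _ _ _ _ g0 s xpredT (fun g => box_vol (al g) (be g))) big_enum.
apply: (le_trans (le_mu A set0 _)).
  by move=> x /cov [g Qg _]; have := Q0 g; rewrite /= Qg.
by rewrite mu0 lee_fin sumr_ge0 // => g _; exact: vol_ge0.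
Qed.

End Basic.

Definition discr (T : Type) : Type := T.
HB.instance Definition _ (T : pointedType) := Pointed.on (discr T).
HB.instance Definition _ (T : pointedType) := @isMeasurable.Build default_measure_display
  (discr T) discrete_measurable discrete_measurable0
  discrete_measurableC discrete_measurableU.

Section Sub.
Variables (R : realType) (d : nat) (d0 : (0 < d)%N).
Implicit Types (a b x : 'rV[R]_d) (A B : set 'rV[R]_d).
Local Notation mu := (@leb_outer R d).
Local Notation V := (discr 'rV[R]_d).

Lemma vol_empty a b i : b ord0 i < a ord0 i -> box_vol a b = 0.
Proof.
move=> h; rewrite /box_vol (bigD1 i) //= maxr_le ?mul0r //; lra.
Qed.

Lemma box_vol_uniq a b a' b' : box a b = box a' b' -> box_vol a b = box_vol a' b'.
Proof.
move=> E.
have [[i hi]|] := pselect (exists i, b ord0 i < a ord0 i).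
  rewrite (vol_empty _ _ _ hi).
  have [[j hj]|] := pselect (exists j, b' ord0 j < a' ord0 j).
    by rewrite (vol_empty _ _ _ hj).
  move=> /forallNP H; exfalso.
  have : box a' b' a' by split => j //; rewrite leNgt; apply/negP => hj; apply: (H j).
  rewrite -E => -[h1 h2]; have := h1 i; have := h2 i; lra.
move=> /forallNP H.
have ab i : a ord0 i <= b ord0 i by rewrite leNgt; apply/negP => hj; apply: (H i).
have : box a b a by split => j //.
have : box a b b by split => j //.
rewrite E => -[h1 h2] [h3 h4].
have : box a' b' a' by split => j //; apply: le_trans (h3 j) (h4 j).
have : box a' b' b' by split => j //; apply: le_trans (h3 j) (h4 j).
rewrite -E => -[h5 h6] [h7 h8].
apply: eq_bigr => i _.
have -> : a ord0 i = a' ord0 i by apply/eqP; rewrite eq_le h3 h7.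
have -> // : b ord0 i = b' ord0 i by apply/eqP; rewrite eq_le h2 h6.
Qed.

Definition bmu (X : set V) : \bar R :=
  ereal_inf [set y | exists a b, X = box a b /\ y = (box_vol a b)%:E].

Lemma bmu_ge0 X : (0 <= bmu X)%E.
Proof. by apply: le_ereal_inf_tmp => _ [a [b [_ ->]]]; rewrite lee_fin vol_ge0. Qed.

Lemma bmu_box a b : bmu (box a b) = (box_vol a b)%:E.
Proof.
apply/eqP; rewrite eq_le; apply/andP; split.
  by apply: ereal_inf_lbound; exists a, b.
apply: le_ereal_inf_tmp => _ [a' [b' [E ->]]].
by rewrite (box_vol_uniq _ _ _ _ E).
Qed.

Lemma bmu_nonbox X : ~ (exists a b, X = box a b) -> bmu X = +oo%E.
Proof.
move=> H; rewrite /bmu (_ : [set y | _] = set0) ?ereal_inf0 //.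
by apply/seteqP; split => // y [a [b [E _]]]; apply: H; exists a, b.
Qed.

Lemma mu_eq A : mu A = mu_ext bmu A.
Proof.
apply/eqP; rewrite eq_le; apply/andP; split; last first.
  apply: le_ereal_inf_tmp => _ [a [b [cov ->]]].
  apply: ge_ereal_inf; exists (\sum_(0 <= k <oo) bmu (box (a k) (b k)))%E.
    by exists (fun k => box (a k) (b k)).
  by apply: lee_nneseries => [k _ _|k _]; rewrite ?bmu_ge0 ?bmu_box.
apply: le_ereal_inf_tmp => _ [F [_ cov] <-].
have [[k hk]|] := pselect (exists k, ~ (exists a b, F k = box a b)).
  rewrite (@eseries_pinfty _ _ _ k) ?leey // => [n _|]; last exact: bmu_nonbox.
  by rewrite gt_eqF // (lt_le_trans _ (bmu_ge0 _)) // ltNy0.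
move=> /forallNP H.
have : forall k, exists ab : 'rV[R]_d * 'rV[R]_d, F k = box ab.1 ab.2.
  move=> k; have := H k => /contrapT [a [b E]]; by exists (a, b).
move=> /choice [f Hf].
have cv : A `<=` \bigcup_k box (f k).1 (f k).2.
  by move=> x /cov [k _ Fx]; exists k => //; rewrite -Hf.
have := @mu_cover R d A (fun k => (f k).1) (fun k => (f k).2) cv.
move=> /le_trans; apply.
by apply: lee_nneseries => [k _ _|k _]; rewrite ?lee_fin ?vol_ge0 ?Hf ?bmu_box.
Qed.

Lemma mu_sub (F : nat -> set 'rV[R]_d) :
  (mu (\bigcup_n F n) <= \sum_(0 <= n <oo) mu (F n))%E.
Proof.
rewrite mu_eq.
have := @mu_ext_sigma_subadditive _ V R bmu bmu_ge0 F.
move=> h; apply: le_trans h _.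
apply: lee_nneseries => [k _ _|k _]; first exact: (mu_ext_ge0 bmu_ge0).
by rewrite mu_eq.
Qed.


Lemma mu_U2 A B : (mu (A `|` B) <= mu A + mu B)%E.
Proof.
pose F n := if n == 0%N then A else if n == 1%N then B else set0.
apply: (le_trans (@le_mu R d (A `|` B) (\bigcup_n F n) _)).
  by move=> x [Ax|Bx]; [exists 0%N | exists 1%N].
apply: (le_trans (mu_sub F)).
rewrite (nneseries_split 0 2); last by move=> k _; exact: (@mu_ge0 R d).
rewrite add0n eseries0 ?adde0; last first.
  by move=> k k2 _; rewrite /F; case: k k2 => [|[|k]] //= _; exact: (@mu0 R d d0).
by rewrite big_nat_recr //= big_nat_recr //= big_geq // add0e.
Qed.

End Sub.


Section Grid.
Variables (R : realType) (d : nat) (d0 : (0 < d)%N) (a b : 'rV[R]_d) (hab : vle a b) (M : nat).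
Local Notation N := M.+1.
Local Notation G := {ffun 'I_d -> 'I_N}.

Definition h i : R := (b ord0 i - a ord0 i) / N%:R.
Definition lo (c : nat) (g : G) : 'rV[R]_d := \row_i (a ord0 i + ((g i)%:R - c%:R) * h i).
Definition hi (e : nat) (g : G) : 'rV[R]_d := \row_i (a ord0 i + ((g i)%:R + e%:R) * h i).
Definition cell c e g := box (lo c g) (hi e g).

Lemma h_ge0 i : 0 <= h i.
Proof. by rewrite /h divr_ge0 // subr_ge0 hab. Qed.

Lemma N_gt0 : 0 < N%:R :> R.
Proof. by rewrite ltr0n. Qed.

Lemma vol_cell g : box_vol (lo 0 g) (hi 1 g) = \prod_i h i.
Proof.
apply: eq_bigr => i _; rewrite !mxE.
have -> : a ord0 i + ((g i)%:R + 1%:R) * h i - (a ord0 i + ((g i)%:R - 0%:R) * h i) = h i.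
  by rewrite /= ?subr0; ring.
by rewrite maxr_ge // h_ge0.
Qed.

Lemma vol_ab : box_vol a b = N%:R ^+ d * \prod_i h i.
Proof.
have -> : box_vol a b = \prod_(i < d) (N%:R * h i).
  apply: eq_bigr => i _; rewrite maxr_ge; last by rewrite subr_ge0 hab.
  by rewrite /h mulrC divfK // gt_eqF // N_gt0.
by rewrite big_split /= prodr_const card_ord.
Qed.

Lemma cover x : box a b x -> exists g, cell 0 1 g x.
Proof.
move=> [xa xb].
pose k i := Num.truncn ((x ord0 i - a ord0 i) / h i).
have hm i : (minn (k i) M < N)%N by rewrite ltnS geq_minr.
exists [ffun i => inord (minn (k i) M)]; split => i; rewrite !mxE ffunE inordK ?hm //.
- have := xa i; have := xb i; have := h_ge0 i; rewrite subr0.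
  have hN : b ord0 i - a ord0 i = N%:R * h i by rewrite /h mulrC divfK // gt_eqF // N_gt0.
  move: (hN); rewrite /k.
  set t := (x ord0 i - a ord0 i) / h i.
  case: (eqVneq (h i) 0) => [-> |hn0]; first by rewrite !mulr0; lra.
  move=> hN' h0 h1 h2; have hp : 0 < h i by rewrite lt_neqAle eq_sym hn0 h0.
  have tE : t * h i = x ord0 i - a ord0 i by rewrite /t divfK.
  have t0 : 0 <= t by rewrite /t divr_ge0 // subr_ge0.
  have := truncn_itv t0 => /andP [t1 t2].
  case: (leqP (Num.truncn t) M) => hk.
    idtac.
    have : (Num.truncn t)%:R * h i <= t * h i by rewrite ler_wpM2r.
    lra.
  idtac.
  have : M%:R <= t.
    apply: le_trans t1; rewrite ler_nat; exact: ltnW.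
  move=> hM; have : M%:R * h i <= t * h i by rewrite ler_wpM2r.
  lra.
- have := xa i; have := xb i; have := h_ge0 i.
  have hN : b ord0 i - a ord0 i = N%:R * h i by rewrite /h mulrC divfK // gt_eqF // N_gt0.
  move: (hN); rewrite /k.
  set t := (x ord0 i - a ord0 i) / h i.
  case: (eqVneq (h i) 0) => [-> |hn0]; first by rewrite !mulr0; lra.
  move=> hN' h0 h1 h2; have hp : 0 < h i by rewrite lt_neqAle eq_sym hn0 h0.
  have tE : t * h i = x ord0 i - a ord0 i by rewrite /t divfK.
  have t0 : 0 <= t by rewrite /t divr_ge0 // subr_ge0.
  have := truncn_itv t0 => /andP [t1 t2].
  case: (leqP (Num.truncn t) M) => hk.
    idtac.
    have : t * h i <= (Num.truncn t).+1%:R * h i by rewrite ler_wpM2r // ltW.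
    rewrite -addn1 natrD; lra.
  idtac.
  have : t * h i <= N%:R * h i by lra.
  rewrite -addn1 natrD; lra.
Qed.


Lemma chain_le (c e : nat) (t s : G) : (forall i, (t i + (c + e) <= s i)%N) ->
  vle (hi e t) (lo c s).
Proof.
move=> H i; rewrite !mxE lerD2l.
have : ((t i)%:R + e%:R + c%:R <= (s i)%:R :> R).
  by rewrite -!natrD ler_nat; have := H i; lia.
move=> h1; apply: ler_wpM2r; [exact: h_ge0 | lra].
Qed.

Definition badset (c e : nat) (X Y : set 'rV[R]_d) : {set G} :=
  [set g | `[< (exists p, X p /\ cell c e g p) /\ (exists q, Y q /\ cell c e g q) >]].

Lemma bad_card c e X Y : (0 < c + e)%N ->
  (forall p q, X p -> Y q -> vle p q -> False) ->
  (#|badset c e X Y| <= (c + e) * (d * N ^ d.-1))%N.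
Proof.
move=> w0 hXY; apply: (@chain_count d N (c + e) d0 w0) => t s.
move=> Ht Hs H.
have [[p [Xp [p0 pt]]] _] : (exists p, X p /\ cell c e t p) /\ (exists q, Y q /\ cell c e t q).
  by move: Ht; rewrite inE => /asboolP.
have [_ [q [Yq [qs q0]]]] : (exists p, X p /\ cell c e s p) /\ (exists q, Y q /\ cell c e s q).
  by move: Hs; rewrite inE => /asboolP.
apply: (hXY p q Xp Yq) => i.
apply: le_trans (pt i) _; apply: le_trans (qs i).
exact: chain_le.
Qed.


Local Notation mu := (@leb_outer R d).
Definition v := \prod_i h i.
Lemma v_ge0 : 0 <= v.
Proof. by apply: prodr_ge0 => i _; exact: h_ge0. Qed.

Lemma mu_cells A (Q : {set G}) :
  A `<=` [set x | exists2 g, g \in Q & cell 0 1 g x] ->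
  (mu A <= (#|Q|%:R * v)%:E)%E.
Proof.
move=> cov; apply: (le_trans (@mu_finset R d d0 _ Q (lo 0) (hi 1) A cov)).
rewrite lee_fin (eq_bigr (fun=> v)); last by move=> g _; rewrite vol_cell.
by rewrite sumr_const mulr_natl.
Qed.

Variables (x0 : 'rV[R]_d) (K : set 'rV[R]_d) (hK : OU x0 K).
Definition X1 := Dom0 x0 `\` K.
Definition X2 := Dom0 x0.
Definition Y2 := ~` Dom0 x0.

Lemma inc1 p q : X1 p -> K q -> vle p q -> False.
Proof. by move=> [p0 nKp] Kq pq; apply: nKp; exact: hK.2 Kq pq p0. Qed.

Lemma inc2 p q : X2 p -> Y2 q -> vle p q -> False.
Proof. by move=> p0 nq pq; apply: nq => i; apply: le_trans (p0 i) (pq i). Qed.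

Lemma meets_split c e g p q : cell c e g p -> cell c e g q -> K p -> ~ K q ->
  g \in badset c e X1 K :|: badset c e X2 Y2.
Proof.
move=> cp cq Kp nKq; rewrite !inE; apply/orP.
have [q0|nq0] := pselect (Dom0 x0 q).
  by left; apply/asboolP; split; [exists q; split => // | exists p; split].
by right; apply/asboolP; split; [exists p; split => //; exact: hK.1 | exists q; split].
Qed.

Lemma card_split c e : (0 < c + e)%N ->
  (#|badset c e X1 K :|: badset c e X2 Y2| <= (c + e) * (d * N ^ d.-1) * 2)%N.
Proof.
move=> w0; apply: (leq_trans (leq_card_setU _ _)).
rewrite muln2 -addnn leq_add //; apply: bad_card => //.
  exact: inc1.
exact: inc2.
Qed.

Lemma grid_split :
  (mu (box a b `&` K) + mu (box a b `&` ~` K) <=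
    ((N ^ d + 2 * (d * N ^ d.-1))%:R * v)%:E)%E.
Proof.
pose Q1 := [set g : G | `[< exists p, K p /\ cell 0 1 g p >]]%SET.
pose Q2 := [set g : G | `[< exists p, ~ K p /\ cell 0 1 g p >]]%SET.
have h1 : (mu (box a b `&` K) <= (#|Q1|%:R * v)%:E)%E.
  apply: mu_cells => x [bx Kx]; have [g cg] := cover _ bx.
  by exists g => //; rewrite inE; apply/asboolP; exists x.
have h2 : (mu (box a b `&` ~` K) <= (#|Q2|%:R * v)%:E)%E.
  apply: mu_cells => x [bx Kx]; have [g cg] := cover _ bx.
  by exists g => //; rewrite inE; apply/asboolP; exists x.
apply: (le_trans (leeD h1 h2)); rewrite -EFinD lee_fin -mulrDl.
apply: ler_wpM2r; first exact: v_ge0.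
rewrite -natrD ler_nat -cardsUI.
apply: leq_add.
  by apply: (leq_trans (max_card _)); rewrite card_ffun !card_ord.
apply: (@leq_trans #|badset 0 1 X1 K :|: badset 0 1 X2 Y2|); last first.
  by apply: leq_trans (card_split 0 1 _) _ => //; rewrite add0n mul1n mulnC.
apply: subset_leq_card; apply/fintype.subsetP => g.
rewrite !inE => /andP [/asboolP [p [Kp cp]] /asboolP [q [nKq cq]]].
by have := meets_split _ _ _ _ _ cp cq Kp nKq; rewrite !inE.
Qed.


Lemma enlarge (r : R) (g : G) (x y : 'rV[R]_d) : (forall i, h i = r) -> cell 0 1 g x ->
  (forall i, `|x ord0 i - y ord0 i| < r) -> cell 1 2 g y.
Proof.
move=> hh [c1 c2] H; split => i; move: (c1 i) (c2 i) (H i);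
  rewrite !mxE hh ltr_norml => h1 h2 /andP[h3 h4];
  rewrite ?mulrDl ?mulrBl ?mul1r in h1 h2 *; rewrite /= ?subr0 ?mul1r in h1 h2 *; lra.
Qed.

Lemma grid_bd r : 0 < r -> (forall i, h i = r) ->
  (mu (box a b `&` (closure K `&` ~` interior K)) <=
    ((6 * (d * N ^ d.-1))%:R * v)%:E)%E.
Proof.
move=> hr hh.
apply: (le_trans (mu_cells _ (badset 1 2 X1 K :|: badset 1 2 X2 Y2) _)).
  move=> x [bx [clx nix]]; have [g cg] := cover _ bx; exists g => //.
  have [y [Ky Hy]] := (closureP K x).1 clx r hr.
  have [z [nKz Hz]] : exists z, ~ K z /\ forall i, `|x ord0 i - z ord0 i| < r.
    apply: contrapT => H; apply: nix; apply/interiorP; exists r => // z Hz.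
    by apply: contrapT => nKz; apply: H; exists z.
  exact: (meets_split _ _ _ _ _ (enlarge _ _ _ _ hh cg Hy) (enlarge _ _ _ _ hh cg Hz) Ky nKz).
rewrite lee_fin; apply: ler_wpM2r; first exact: v_ge0.
rewrite ler_nat; apply: leq_trans (card_split 1 2 _) _ => //.
by rewrite mulnAC.
Qed.

End Grid.


Lemma small_est (R : realType) (c vol v del : R) (N d : nat) : (0 < d)%N -> 0 < del ->
  0 <= c -> vol = N.+1%:R ^+ d * v -> c * vol / del < N.+1%:R ->
  c * (N.+1%:R ^+ d.-1 * v) < del.
Proof.
move=> d0 hd hc hv hN.
set P := N.+1%:R ^+ d.-1 * v.
have vP : vol = N.+1%:R * P by rewrite hv /P mulrA -exprS prednK.
have n0 : 0 < N.+1%:R :> R by rewrite ltr0n.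
move: hN; rewrite ltr_pdivrMr // vP => h.
nra.
Qed.

Section Final.
Variables (R : realType) (d : nat) (d0 : (0 < d)%N) (x0 : 'rV[R]_d) (K : set 'rV[R]_d)
  (hK : OU x0 K).
Local Notation mu := (@leb_outer R d).

Lemma box_split a b (del : R) : 0 < del ->
  (mu (box a b `&` K) + mu (box a b `&` ~` K) <= (box_vol a b)%:E + del%:E)%E.
Proof.
move=> hd.
have [[i hi]|] := pselect (exists i, b ord0 i < a ord0 i).
  have E : forall Y, box a b `&` Y = set0.
    move=> Y; apply/seteqP; split => // x [[h1 h2] _]; have := h1 i; have := h2 i; lra.
  rewrite !E (@mu0 R d d0) adde0 -EFinD lee_fin addr_ge0 ?vol_ge0 //; exact: ltW.
move=> /forallNP H.
have hab : vle a b by move=> i; rewrite leNgt; apply/negP => h; apply: (H i).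
pose M := Num.truncn (2 * d%:R * box_vol a b / del).
apply: (le_trans (@grid_split R d d0 a b hab M x0 K hK)).
rewrite -EFinD lee_fin natrD mulrDl natrX (@vol_ab R d a b hab M) lerD2l.
rewrite natrM natrM natrX -mulrA -mulrA mulrA.
apply: ltW.
apply: small_est => //.
by rewrite -(@vol_ab R d a b hab M) /M; exact: truncnS_gt.
Qed.


Lemma K_meas : leb_measurable K.
Proof.
move=> E; apply/eqP; rewrite eq_le; apply/andP; split.
  apply: (le_trans _ (@mu_U2 R d d0 (E `&` K) (E `&` ~` K))).
  apply: le_mu => x Ex; case: (pselect (K x)) => Kx; [left|right]; by split.
apply: le_ereal_inf_tmp => _ [a [b [cov ->]]].
apply/lee_addgt0Pr => e e0.
have h1 : (mu (E `&` K) <= \sum_(0 <= k <oo) mu (box (a k) (b k) `&` K))%E.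
  apply: (le_trans _ (@mu_sub R d (fun k => box (a k) (b k) `&` K))).
  apply: le_mu => x [/cov [k _ bx] Kx]; by exists k.
have h2 : (mu (E `&` ~` K) <= \sum_(0 <= k <oo) mu (box (a k) (b k) `&` ~` K))%E.
  apply: (le_trans _ (@mu_sub R d (fun k => box (a k) (b k) `&` ~` K))).
  apply: le_mu => x [/cov [k _ bx] Kx]; by exists k.
apply: le_trans (leeD h1 h2) _.
rewrite -nneseriesD; last 2 first.
- by move=> k _ _; exact: mu_ge0.
- by move=> k _ _; exact: mu_ge0.
apply: (le_trans _ (epsilon_trick (A := fun k => (box_vol (a k) (b k))%:E) xpredT _ (ltW e0))); last first.
  by move=> k; rewrite lee_fin vol_ge0.
apply: lee_nneseries => [k _ _|k _].
  by rewrite adde_ge0 // mu_ge0.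
apply: box_split.
by rewrite divr_gt0 // ltr0n expn_gt0.
Qed.


Lemma bd_null : mu (closure K `&` ~` interior K) = 0%E.
Proof.
apply/eqP; rewrite eq_le mu_ge0 andbT.
pose C n : set 'rV[R]_d := box (const_mx (- (n.+1)%:R)) (const_mx (n.+1)%:R).
apply: (le_trans (@le_mu R d _ (\bigcup_n (C n `&` (closure K `&` ~` interior K))) _)).
  move=> x hx; exists (Num.truncn (\sum_i `|x ord0 i|)) => //; split => //.
  have lt i : `|x ord0 i| < (Num.truncn (\sum_i `|x ord0 i|)).+1%:R.
    apply: le_lt_trans (truncnS_gt _).
    rewrite (bigD1 i) //= lerDl sumr_ge0 // => j _.
  split => i; rewrite mxE; have := lt i; rewrite ltr_norml => /andP [h1 h2]; exact: ltW.
apply: (le_trans (@mu_sub R d _)).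
rewrite eseries0 // => n _ _.
apply/eqP; rewrite eq_le mu_ge0 andbT.
apply/lee_addgt0Pr => e e0; rewrite add0e.
set a : 'rV[R]_d := const_mx (- (n.+1)%:R).
set b : 'rV[R]_d := const_mx ((n.+1)%:R).
have n0 : 0 < (n.+1)%:R :> R by rewrite ltr0n.
have hab : vle a b by move=> i; rewrite !mxE; lra.
pose Mn := Num.truncn (6 * d%:R * box_vol a b / e).
pose r : R := ((n.+1)%:R + (n.+1)%:R) / Mn.+1%:R.
have hr : 0 < r by rewrite divr_gt0 // ?ltr0n //; lra.
have hh : forall i, @h R d a b Mn i = r by move=> i; rewrite /h !mxE opprK.
apply: le_trans (@grid_bd R d d0 a b hab Mn x0 K hK r hr hh) _.
rewrite lee_fin natrM natrM natrX mulrA; apply: ltW.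
rewrite -mulrA; apply: small_est => //.
by rewrite -(@vol_ab R d a b hab Mn) /Mn; exact: truncnS_gt.
Qed.

Lemma mu_int : mu (interior K) = mu K.
Proof.
apply/eqP; rewrite eq_le; apply/andP; split.
  by apply: le_mu; exact: interior_sub.
apply: (le_trans (@le_mu R d K (closure K) (@subset_closure _ K))).
apply: (le_trans (@le_mu R d _ (interior K `|` (closure K `&` ~` interior K)) _)).
  by move=> x clx; case: (pselect (interior K x)) => ix; [left|right].
by apply: (le_trans (@mu_U2 R d d0 _ _)); rewrite bd_null adde0.
Qed.

Lemma mu_cl : mu K = mu (closure K).
Proof.
apply/eqP; rewrite eq_le; apply/andP; split.
  by apply: le_mu; exact: subset_closure.
rewrite -mu_int.
apply: (le_trans (@le_mu R d _ (interior K `|` (closure K `&` ~` interior K)) _)).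
  by move=> x clx; case: (pselect (interior K x)) => ix; [left|right].
by apply: (le_trans (@mu_U2 R d d0 _ _)); rewrite bd_null adde0.
Qed.

End Final.

Lemma mu_dim0 (R : realType) (A : set 'rV[R]_0) : leb_outer A = +oo%E.
Proof.
apply/ereal_inf_pinfty => _ [a [b [_ ->]]] /=.
have v1 k : box_vol (a k) (b k) = 1 by rewrite /box_vol big_ord0.
set S := (\sum_(0 <= k <oo) _)%E.
have H k : ((k%:R)%:E <= S)%E.
  apply: le_trans (nneseries_lim_ge k _); last by move=> n _ _; rewrite lee_fin vol_ge0.
  rewrite sumEFin lee_fin (eq_bigr (fun=> 1)); last by move=> i _; rewrite v1.
  by rewrite sumr_const_nat subn0.
move: (H 0%N) (H (Num.truncn (fine S)).+1); clear H; clearbody S; case: S => [r||] //=.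
  by move=> _; rewrite lee_fin => /(lt_le_trans (truncnS_gt r)); rewrite ltxx.
Qed.

Theorem mainTheorem1 (R : realType) (d : nat) (x0 : 'rV[R]_d)
    (K : set 'rV[R]_d) :
  OU x0 K ->
  [/\ leb_measurable K,
      OU x0 (closure K),
      OU x0 (closure (interior K)),
      lambda (interior K) = lambda K
    & lambda K = lambda (closure K)].
Proof.
move=> hK; split.
- case: d x0 K hK => [|n] x0 K hK.
    by move=> E; rewrite !mu_dim0.
  exact: (@K_meas R n.+1 isT x0 K hK).
- exact: OU_closure.
- exact: OU_cl_int.
- rewrite /lambda; case: d x0 K hK => [|n] x0 K hK; first by rewrite !mu_dim0.
  exact: (@mu_int R n.+1 isT x0 K hK).
- rewrite /lambda; case: d x0 K hK => [|n] x0 K hK; first by rewrite !mu_dim0.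
  exact: (@mu_cl R n.+1 isT x0 K hK).
Qed.
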